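(* Let $r\ge4$, $n\ge1$, and $p\in[0,1/2]$ with $pn$ an integer. Let $K=\frac{2pn+1}{n}$ and define $d=b_r$ if $r\le(1+K)^2/K$, and $d=1+K$ otherwise. For $i\in\{0,\dots,n-1\}$ let $X_i=(x_{j,i})_{j\ge0}$ with $x_{j,i}=d^{\,j+i/n}$. Then each $X_i$ has robustness at most $r$. Moreover, let $T\ge 1+d$, let $l=l(T)$ be the best index at $T$, suppose the predicted answers to the queries $Q_0,\dots,Q_{n-1}$ differ from the true answers in at most $\eta n$ positions where $0\le\eta\le p$, let $N$ be the number of ''no'' answers in the prediction, and let $m=(N-1-pn)\bmod n\in\{0,\dots,n-1\}$ be the index chosen by the scheme $\mathrm{Robust}_p$. Then $$\frac{T}{\ell(X_m,T)}\ \le\ \frac{d^{1+\frac1n+2p}}{d-1}.$$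
   Context: A schedule is an increasing sequence $(x_j)_{j\ge0}$ of positive reals (contract lengths), executed in order, so the $j$-th contract completes at time $S_j=\sum_{k=0}^j x_k$. For $T>0$, $\ell(X,T)=\max\{x_j: S_j\le T\}$ ($0$ if none). The robustness of $X$ is $\sup_{j\ge1}S_j/x_{j-1}$. For $r\ge4$, $b_r=\frac{r+\sqrt{r^2-4r}}{2}$. For an interruption $T$, the best index $l(T)\in\{0,\dots,n-1\}$ is the index $i$ maximizing $\ell(X_i,T)$ (it is unique since all contract lengths $d^{j+i/n}$ are distinct). The binary prediction consists of answers to $n$ queries $Q_0,\dots,Q_{n-1}$, where $Q_i$ asks ''Is the best index $l(T)$ at most $i-1$, i.e., is the best schedule among $X_0,\dots,X_{i-1}$?''; thus the true answer to $Q_i$ is ''no'' exactly when $i\le l(T)$, and the error-free number of ''no'' answers is $l(T)+1$. The prediction error $\eta\in[0,1]$ is the fraction of the $n$ predicted answers that are wrong. *)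

(* Defs.v *)
From Stdlib Require Import Reals Lra Lia ZArith List ClassicalEpsilon.
Open Scope R_scope.

Definition Ssum (x : nat -> R) (j : nat) : R := sum_f_R0 x j.

Definition ell_spec (x : nat -> R) (T v : R) : Prop :=
  (exists j, Ssum x j <= T /\ v = x j /\ (forall k, Ssum x k <= T -> x k <= v))
  \/ ((forall j, T < Ssum x j) /\ v = 0).

Definition ell (x : nat -> R) (T : R) : R := epsilon (inhabits 0) (ell_spec x T).

Definition robustness_le (x : nat -> R) (r : R) : Prop :=
  forall j : nat, (1 <= j)%nat -> Ssum x j / x (j - 1)%nat <= r.

Definition b_r (r : R) : R := (r + sqrt (r ^ 2 - 4 * r)) / 2.

Definition Kval (n : nat) (p : R) : R := (2 * p * INR n + 1) / INR n.

Definition dval (r : R) (n : nat) (p : R) : R :=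
  let K := Kval n p in
  if Rle_dec r ((1 + K) ^ 2 / K) then b_r r else 1 + K.

Definition Xsched (d : R) (n i : nat) : nat -> R :=
  fun j => Rpower d (INR j + INR i / INR n).

(* predicted answers: pred i = true means "no" for query Q_i, i < n.
   The true answer to Q_i is "no" iff i <= l. *)
Definition num_errors (n l : nat) (pred : nat -> bool) : nat :=
  length (filter (fun i => negb (Bool.eqb (pred i) (Nat.leb i l))) (seq 0 n)).

Definition num_no (n : nat) (pred : nat -> bool) : nat :=
  length (filter pred (seq 0 n)).

(* m = (N - 1 - pn) mod n, with pn = k *)
Definition robust_index (n k : nat) (pred : nat -> bool) : nat :=
  Z.to_nat ((Z.of_nat (num_no n pred) - 1 - Z.of_nat k) mod Z.of_nat n)%Z.

(* Main.v *)
Require Import Defs.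
From Stdlib Require Import Reals Lra Lia List ClassicalEpsilon FunctionalExtensionality ZArith.
Open Scope R_scope.

Lemma Ssum_mono x : (forall k, 0 < x k) -> forall j j', (j <= j')%nat -> Ssum x j <= Ssum x j'.
Proof.
  intros Hx j j' H; induction H; [lra|].
  unfold Ssum in *; simpl; specialize (Hx (S m)); lra.
Qed.

Lemma Ssum_ge x : (forall k, 0 < x k) -> forall j, x j <= Ssum x j.
Proof.
  intros Hx [|j]; unfold Ssum; simpl; [lra|].
  assert (0 <= sum_f_R0 x j).
  { apply cond_pos_sum. intros; left; auto. }
  lra.
Qed.

Lemma find_max x T : forall N, Ssum x 0 <= T ->
  exists J, (J <= N)%nat /\ Ssum x J <= T /\ forall k, (k <= N)%nat -> Ssum x k <= T -> (k <= J)%nat.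
Proof.
  induction N; intros H0.
  - exists 0%nat; split; [lia|split; auto]; intros; lia.
  - destruct (IHN H0) as [J [H1 [H2 H3]]].
    destruct (Rle_dec (Ssum x (S N)) T).
    + exists (S N); split; [lia|split; auto]; intros; lia.
    + exists J; split; [lia|split; auto]. intros k Hk Hs.
      destruct (Nat.eq_dec k (S N)); [subst; lra|]. apply H3; auto; lia.
Qed.

Lemma ell_prop x T : (forall k, 0 < x k) -> (forall a b, (a <= b)%nat -> x a <= x b) ->
  Ssum x 0 <= T -> (exists j0, T < Ssum x j0) ->
  exists j, Ssum x j <= T /\ ell x T = x j /\ (forall k, Ssum x k <= T -> x k <= ell x T).
Proof.
  intros Hp Hm H0 [j0 Hj0].
  assert (Hs : ell_spec x T (ell x T)).
  { unfold ell. apply epsilon_spec.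
    destruct (find_max x T j0 H0) as [J [H1 [H2 H3]]].
    exists (x J). left. exists J. split; auto. split; auto.
    intros k Hk. apply Hm. apply H3; auto.
    destruct (Compare_dec.le_lt_dec k j0); auto.
    assert (Ssum x j0 <= Ssum x k) by (apply Ssum_mono; auto; lia). lra. }
  destruct Hs as [[j [A [B C]]] | [A B]].
  - exists j; auto.
  - specialize (A 0%nat); lra.
Qed.

Definition xs (q : R) (n i : nat) : nat -> R := fun j => q ^ (j * n + i).

Lemma xs_ell q n i T : 1 < q -> (1 <= n)%nat -> q ^ i <= T ->
  exists j, Ssum (xs q n i) j <= T /\ ell (xs q n i) T = q ^ (j * n + i) /\
    (forall k, Ssum (xs q n i) k <= T -> q ^ (k * n + i) <= ell (xs q n i) T).
Proof.
  intros Hq Hn HT. apply ell_prop.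
  - intros; unfold xs; apply pow_lt; lra.
  - intros a b H; unfold xs; apply Rle_pow; [lra|]. nia.
  - unfold Ssum, xs; simpl. lra.
  - destruct (Pow_x_infinity q) with (b := T + 1) as [N HN].
    { rewrite Rabs_right; lra. }
    exists N. specialize (HN N (le_n _)). rewrite Rabs_right in HN by (left; apply pow_lt; lra).
    assert (q ^ N <= xs q n i N) by (unfold xs; apply Rle_pow; [lra|]; nia).
    assert (xs q n i N <= Ssum (xs q n i) N) by (apply Ssum_ge; intros; unfold xs; apply pow_lt; lra).
    unfold xs in *; lra.
Qed.

Lemma geo c D j : sum_f_R0 (fun u => c * D ^ u) j * (D - 1) = c * (D ^ (S j) - 1).
Proof.
  induction j; simpl; [ring|]. rewrite Rmult_plus_distr_r, IHj. simpl. ring.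
Qed.

Lemma xs_sum q n i j : Ssum (xs q n i) j * (q ^ n - 1) = q ^ i * ((q ^ n) ^ (S j) - 1).
Proof.
  rewrite <- geo. unfold Ssum. f_equal. apply sum_eq. intros u _. unfold xs.
  rewrite pow_add, <- pow_mult, Nat.mul_comm. ring.
Qed.

Lemma xs_sum_lt q n i j : 1 < q -> Ssum (xs q n i) j * (q ^ n - 1) < q ^ (j * n + i + n).
Proof.
  intros Hq. rewrite xs_sum. rewrite <- pow_mult.
  replace (j * n + i + n)%nat with (i + n * S j)%nat by lia. rewrite pow_add.
  assert (0 < q ^ i) by (apply pow_lt; lra). nra.
Qed.

Lemma dval_facts r n p : 4 <= r -> (1 <= n)%nat -> 0 <= p ->
  1 < dval r n p /\ (dval r n p) ^ 2 <= r * (dval r n p - 1).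
Proof.
  intros Hr Hn Hp. unfold dval, Kval.
  assert (Hn' : 1 <= INR n) by (apply (le_INR 1); auto).
  set (K := (2 * p * INR n + 1) / INR n).
  assert (HK : 0 < K) by (unfold K; apply Rdiv_lt_0_compat; nra).
  destruct (Rle_dec r ((1 + K) ^ 2 / K)).
  - unfold b_r. assert (H0 : 0 <= r ^ 2 - 4 * r) by nra.
    pose proof (sqrt_pos (r ^ 2 - 4 * r)). pose proof (sqrt_sqrt _ H0).
    set (s := sqrt (r ^ 2 - 4 * r)) in *. split; nra.
  - apply Rnot_le_lt in n0. split; [lra|].
    assert ((1 + K) ^ 2 / K * K < r * K) by (apply Rmult_lt_compat_r; auto).
    replace ((1 + K) ^ 2 / K * K) with ((1+K)^2) in H by (field; lra). lra.
Qed.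

Lemma q_facts d n : 1 < d -> (1 <= n)%nat ->
  let q := Rpower d (1 / INR n) in
  1 < q /\ q ^ n = d /\ (forall i, Xsched d n i = xs q n i).
Proof.
  intros Hd Hn q.
  assert (Hn' : 1 <= INR n) by (apply (le_INR 1); auto).
  assert (Hq : 1 < q).
  { unfold q. apply Rle_lt_trans with (Rpower d 0); [rewrite Rpower_O; lra|]. apply Rpower_lt; auto.
    apply Rdiv_lt_0_compat; lra. }
  split; [auto|split].
  - rewrite <- Rpower_pow by lra. unfold q. rewrite Rpower_mult.
    replace (1 / INR n * INR n) with 1 by (field; lra). apply Rpower_1; lra.
  - intros i. apply functional_extensionality. intros j. unfold Xsched, xs.
    rewrite <- Rpower_pow by lra. unfold q. rewrite Rpower_mult. f_equal.
    rewrite plus_INR, mult_INR. field; lra.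
Qed.

Lemma count_diff (f g : nat -> bool) L :
  (length (filter f L) <= length (filter g L) + length (filter (fun i => negb (Bool.eqb (f i) (g i))) L))%nat /\
  (length (filter g L) <= length (filter f L) + length (filter (fun i => negb (Bool.eqb (f i) (g i))) L))%nat.
Proof.
  induction L as [|a L IH]; simpl; [lia|].
  destruct (f a), (g a); simpl; lia.
Qed.

Lemma count_leb l n : length (filter (fun i => Nat.leb i l) (seq 0 n)) = Nat.min n (S l).
Proof.
  induction n; [reflexivity|].
  rewrite seq_S, filter_app, length_app, IHn. simpl.
  destruct (Nat.leb n l) eqn:E; simpl.
  - apply Nat.leb_le in E; lia.
  - apply Nat.leb_gt in E; lia.
Qed.

Lemma index_facts n k l E N : (l < n)%nat -> (N <= S l + E)%nat -> (S l <= N + E)%nat ->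
  (E <= k)%nat -> (2 * k <= n)%nat ->
  let m := Z.to_nat ((Z.of_nat N - 1 - Z.of_nat k) mod Z.of_nat n)%Z in
  (m < n)%nat /\ ((m <= l /\ l - m <= 2 * k)%nat \/ (l < m /\ l + n - m <= 2 * k)%nat).
Proof.
  intros Hl H1 H2 H3 H4 m. unfold m.
  set (s := (Z.of_nat N - 1 - Z.of_nat k)%Z).
  destruct (Z_le_gt_dec 0 s).
  - rewrite Z.mod_small by (unfold s; lia). unfold s; lia.
  - replace s with (s + Z.of_nat n + (-1) * Z.of_nat n)%Z by ring.
    rewrite Z.mod_add by lia. rewrite Z.mod_small by (unfold s in *; lia). unfold s in *; lia.
Qed.

Lemma div_helper x a r e : 0 < a -> 0 < e -> x * e <= r * a * e -> x / a <= r.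
Proof.
  intros Ha He H. apply Rmult_le_reg_r with a; auto.
  replace (x / a * a) with x by (field; lra).
  apply Rmult_le_reg_r with e; auto.
Qed.

Lemma div_helper2 T a L B e : 0 < a -> a <= L -> 0 <= B -> 0 < e -> T * e <= B * a -> T / L <= B / e.
Proof.
  intros Ha HL HT He H. apply Rmult_le_reg_r with (L * e); [nra|].
  replace (T / L * (L * e)) with (T * e) by (field; lra).
  replace (B / e * (L * e)) with (B * L) by (field; lra). nra.
Qed.

Theorem theorem4 (r : R) (n : nat) (p : R) (k : nat) :
  4 <= r -> (1 <= n)%nat -> 0 <= p <= 1 / 2 -> p * INR n = INR k ->
  (forall i : nat, (i < n)%nat -> robustness_le (Xsched (dval r n p) n i) r) /\
  (forall (T : R) (l : nat) (pred : nat -> bool) (eta : R),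
     1 + dval r n p <= T ->
     (l < n)%nat ->
     (forall i : nat, (i < n)%nat ->
        ell (Xsched (dval r n p) n i) T <= ell (Xsched (dval r n p) n l) T) ->
     0 <= eta <= p ->
     INR (num_errors n l pred) <= eta * INR n ->
     T / ell (Xsched (dval r n p) n (robust_index n k pred)) T
       <= Rpower (dval r n p) (1 + 1 / INR n + 2 * p) / (dval r n p - 1)).
Proof.
  intros Hr Hn Hp Hk.
  destruct (dval_facts r n p Hr Hn (proj1 Hp)) as [Hd Hrob].
  set (d := dval r n p) in *.
  destruct (q_facts d n Hd Hn) as [Hq [Hqn HX]].
  set (q := Rpower d (1 / INR n)) in *.
  assert (Hn' : 1 <= INR n) by (apply (le_INR 1); auto).
  split.
  - intros i Hi j Hj. rewrite HX.
    destruct j as [|j]; [lia|]. replace (S j - 1)%nat with j by lia.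
    unfold xs at 2.
    assert (Ha : q ^ (j * n + i) = q ^ i * d ^ j).
    { rewrite pow_add, Nat.mul_comm, pow_mult, Hqn. ring. }
    assert (HA : 0 < q ^ i * d ^ j) by (apply Rmult_lt_0_compat; apply pow_lt; lra).
    apply div_helper with (d - 1); [rewrite Ha; auto| lra|].
    pose proof (xs_sum q n i (S j)) as H. rewrite Hqn in H. rewrite H, Ha.
    replace (d ^ S (S j)) with (d ^ j * d ^ 2) by (simpl; ring).
    assert (0 < q ^ i) by (apply pow_lt; lra).
    assert (q ^ i * d ^ j * d ^ 2 <= q ^ i * d ^ j * (r * (d - 1))) by (apply Rmult_le_compat_l; lra).
    nra.
  - intros T l pred eta HT Hl Hbest Heta Herr.
    assert (Hb : forall i, (i < n)%nat -> ell (xs q n i) T <= ell (xs q n l) T)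
      by (intros; rewrite <- !HX; auto).
    rewrite HX.
    assert (HR : Rpower d (1 + 1 / INR n + 2 * p) = q ^ (n + 1 + 2 * k)).
    { rewrite <- Rpower_pow by lra. unfold q. rewrite Rpower_mult. f_equal.
      rewrite !plus_INR, mult_INR, <- Hk. simpl. field. lra. }
    rewrite HR.
    assert (Hqi : forall i, (i <= n)%nat -> q ^ i <= T).
    { intros i Hi. rewrite <- Hqn in HT. pose proof (Rle_pow q i n ltac:(lra) Hi). lra. }
    destruct (xs_ell q n l T Hq Hn (Hqi l ltac:(lia))) as [js [Hsl [Hel _]]].
    assert (HA : T * (d - 1) < q ^ (js * n + l + 1 + n)).
    { destruct (Nat.eq_dec (S l) n) as [E|E].
      - destruct (Rle_dec (Ssum (xs q n 0) (S js)) T) as [Hc|Hc].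
        + exfalso. destruct (xs_ell q n 0 T Hq Hn (Hqi 0%nat ltac:(lia))) as [_ [_ [_ H3]]].
          specialize (H3 _ Hc). specialize (Hb 0%nat ltac:(lia)). rewrite Hel in Hb.
          replace (S js * n + 0)%nat with (S (js * n + l)) in H3 by (simpl; lia).
          simpl in H3. assert (0 < q ^ (js * n + l)) by (apply pow_lt; lra). nra.
        + apply Rnot_le_lt in Hc. pose proof (xs_sum_lt q n 0 (S js) Hq) as H.
          rewrite Hqn in H.
          replace (S js * n + 0 + n)%nat with (js * n + l + 1 + n)%nat in H by (simpl; lia).
          assert (T * (d - 1) < Ssum (xs q n 0) (S js) * (d - 1)) by (apply Rmult_lt_compat_r; lra).
          lra.
      - destruct (Rle_dec (Ssum (xs q n (S l)) js) T) as [Hc|Hc].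
        + exfalso. destruct (xs_ell q n (S l) T Hq Hn (Hqi (S l) ltac:(lia))) as [_ [_ [_ H3]]].
          specialize (H3 _ Hc). specialize (Hb (S l) ltac:(lia)). rewrite Hel in Hb.
          replace (js * n + S l)%nat with (S (js * n + l)) in H3 by lia.
          simpl in H3. assert (0 < q ^ (js * n + l)) by (apply pow_lt; lra). nra.
        + apply Rnot_le_lt in Hc. pose proof (xs_sum_lt q n (S l) js Hq) as H.
          rewrite Hqn in H.
          replace (js * n + S l + n)%nat with (js * n + l + 1 + n)%nat in H by lia.
          assert (T * (d - 1) < Ssum (xs q n (S l)) js * (d - 1)) by (apply Rmult_lt_compat_r; lra).
          lra. }
    assert (HE : (num_errors n l pred <= k)%nat).
    { apply INR_le. rewrite <- Hk. assert (eta * INR n <= p * INR n) by (apply Rmult_le_compat_r; lra). lra. }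
    assert (H2k : (2 * k <= n)%nat).
    { apply INR_le. rewrite mult_INR, <- Hk. simpl. nra. }
    destruct (count_diff pred (fun i => Nat.leb i l) (seq 0 n)) as [C1 C2].
    rewrite count_leb in C1, C2.
    assert (P1 : (num_no n pred <= S l + num_errors n l pred)%nat) by (unfold num_no, num_errors; lia).
    assert (P2 : (S l <= num_no n pred + num_errors n l pred)%nat) by (unfold num_no, num_errors; lia).
    pose proof (index_facts n k l (num_errors n l pred) (num_no n pred) Hl P1 P2 HE H2k) as HI.
    cbv zeta in HI.
    change (Z.to_nat ((Z.of_nat (num_no n pred) - 1 - Z.of_nat k) mod Z.of_nat n)) with (robust_index n k pred) in HI.
    destruct HI as [Hm Hcase].
    set (m := robust_index n k pred) in *.
    assert (HB : exists jm e, Ssum (xs q n m) jm <= T /\ (jm * n + m + e = js * n + l + 1 + n)%nat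
                 /\ (e <= n + 1 + 2 * k)%nat).
    { destruct Hcase as [[C3 C4]|[C3 C4]].
      - exists js, (l - m + 1 + n)%nat. split; [|split; lia].
        apply Rle_trans with (Ssum (xs q n l) js); auto.
        unfold Ssum; apply sum_Rle; intros; unfold xs; apply Rle_pow; [lra|lia].
      - destruct js as [|js'].
        + exists 0%nat, (l + 1 + n - m)%nat. split; [|split; lia].
          unfold Ssum, xs. simpl. apply Hqi. lia.
        + exists js', (l + n - m + 1 + n)%nat. split; [|split; lia].
          apply Rle_trans with (Ssum (xs q n l) (S js')); auto.
          unfold Ssum. rewrite (decomp_sum _ (S js')) by lia. simpl Init.Nat.pred.
          assert (0 < xs q n l 0) by (unfold xs; apply pow_lt; lra).
          cut (sum_f_R0 (xs q n m) js' <= sum_f_R0 (fun i => xs q n l (S i)) js'); [lra|].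
          apply sum_Rle; intros; unfold xs; apply Rle_pow; [lra|simpl; lia]. }
    destruct HB as [jm [e [HS [He1 He2]]]].
    destruct (xs_ell q n m T Hq Hn (Hqi m ltac:(lia))) as [_ [_ [_ H3]]].
    specialize (H3 _ HS).
    assert (Hapos : 0 < q ^ (jm * n + m)) by (apply pow_lt; lra).
    apply div_helper2 with (q ^ (jm * n + m)); auto; try lra.
    left; apply pow_lt; lra.
    rewrite <- He1, pow_add in HA.
    assert (q ^ e <= q ^ (n + 1 + 2 * k)) by (apply Rle_pow; [lra|lia]).
    nra.
Qed.
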